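(* Let $\mathfrak M$ be a relational structure with domain $\Sigma$. For every $n\ge1$ and every relation $R\subseteq(\Sigma^* )^n$, $R$ is $MSO(\mathfrak M)$-definable if and only if $R$ is $\mathfrak M$-recognizable.
   Context: Let $\mathfrak L$ be a relational language and $\mathfrak M$ an $\mathfrak L$-structure with domain $\Sigma$ (finite or infinite). Let $\#\notin\Sigma$ and let $\mathfrak M_\#$ be the structure in the language $\mathfrak L_\#=\mathfrak L\cup\{P_\#\}$ with domain $\Sigma\cup\{\#\}$, every symbol of $\mathfrak L$ interpreted as in $\mathfrak M$ and $P_\#(x)$ holding iff $x=\#$. For $w=(w_1,\dots,w_n)\in(\Sigma^* )^n$, $\langle w\rangle$ denotes the word over $(\Sigma\cup\{\#\})^n$ of length $\max_i|w_i|$ obtained by padding each $w_i$ on the right with $\#$'s and reading them in parallel; $\pi_j(\langle w\rangle)$ is its $j$-th component and $u[i]$ the $i$-th letter of a word $u$ (starting at $0$). $\mathfrak M$-automata: an $\mathfrak M$-automaton with $n$ tapes is $(Q,n,E,I,T)$ with $Q$ a finite set of states, $I,T\subseteq Q$, and $E\subseteq Q\times\mathcal F_n\times Q$ a finite set of transitions, $\mathcal F_n$ the set of first-order $\mathfrak L_\#$-formulas with $n$ free variables; $w$ is accepted if there are states $q_0\in I,\dots,q_m\in T$ ($m=|\langle w\rangle|$) such that for each $i<m$ some $(q_i,\varphi,q_{i+1})\in E$ satisfies $\mathfrak M_\#\models\varphi(\pi_1(\langle w\rangle)[i],\dots,\pi_n(\langle w\rangle)[i])$. $R$ is $\mathfrak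 M$-recognizable if it is the set of tuples accepted by some $\mathfrak M$-automaton. $MSO(\mathfrak M)$-definability: to each first-order $\mathfrak L_\#$-formula $F$ with at least one free variable associate a unary predicate symbol $\alpha_F$; $MSO(\mathfrak L)$ is monadic second-order logic over the signature $\{<\}\cup\{\alpha_F\}$. $R\subseteq(\Sigma^* )^n$ is $MSO(\mathfrak M)$-definable if there is an $MSO(\mathfrak L)$-sentence $\psi$ such that $w\in R$ iff $\psi$ holds in the structure with domain $D=\{0,\dots,|\langle w\rangle|-1\}$, $<$ the natural order on $D$, and, for each $F$ with $n$ free variables, $\alpha_F(x)$ true iff $\mathfrak M_\#\models F(\pi_1(\langle w\rangle)[x],\dots,\pi_n(\langle w\rangle)[x])$. *)

(* Defs.v *)
From Stdlib Require Import List Arith.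
Import ListNotations.
Set Implicit Arguments.

Record rel_lang := { Sym : Type; arity : Sym -> nat }.

(* An L-structure M with domain Sigma = dom M.  interp s is only consulted
   on lists of length arity s. *)
Record structure (L : rel_lang) := { dom : Type; interp : Sym L -> list dom -> Prop }.

(* First-order formulas of L_# = L ∪ {P_#} (with equality); variables are nats. *)
Inductive fo (L : rel_lang) : Type :=
| FRel : Sym L -> list nat -> fo L
| FHash : nat -> fo L
| FEq : nat -> nat -> fo L
| FNot : fo L -> fo L
| FAnd : fo L -> fo L -> fo L
| FEx : nat -> fo L -> fo L.

Definition upd {A : Type} (e : nat -> A) (x : nat) (a : A) : nat -> A :=
  fun y => if Nat.eqb y x then a else e y.

(* Satisfaction in M_# : domain option (dom M), None playing the role of #. *)
Fixpoint fo_sat L (M : structure L) (env : nat -> option (dom M)) (F : fo L) : Prop :=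
  match F with
  | FRel _ s args => length args = arity L s /\
      exists l, map env args = map Some l /\ interp M s l
  | FHash _ x => env x = None
  | FEq _ x y => env x = env y
  | FNot f => ~ fo_sat M env f
  | FAnd f g => fo_sat M env f /\ fo_sat M env g
  | FEx x f => exists a, fo_sat M (upd env x a) f
  end.

Fixpoint fo_free L (F : fo L) (x : nat) : Prop :=
  match F with
  | FRel _ _ args => In x args
  | FHash _ y => x = y
  | FEq _ y z => x = y \/ x = z
  | FNot f => fo_free f x
  | FAnd f g => fo_free f x \/ fo_free g x
  | FEx y f => x <> y /\ fo_free f x
  end.

Definition fo_formula_n L (n : nat) (F : fo L) : Prop :=
  forall x, fo_free F x -> x < n.

(* Tuples of words w = (w_1..w_n) are lists of length n of words. *)
Definition conv_len {S : Type} (w : list (list S)) : nat :=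
  fold_right max 0 (map (@length S) w).

(* The letter <w>[i] : the i-th letter of each padded component
   (None = #). *)
Definition conv_letter {S : Type} (w : list (list S)) (i : nat) : list (option S) :=
  map (fun u => nth_error u i) w.

(* Assignment x_j := pi_{j+1}(<w>)[i]. *)
Definition conv_env {S : Type} (w : list (list S)) (i : nat) : nat -> option S :=
  fun k => nth k (conv_letter w i) None.

Record automaton (L : rel_lang) (n : nat) := {
  state : Type;
  state_finite : exists l : list state, forall q, In q l;
  initial : state -> Prop;
  final : state -> Prop;
  trans : list (state * fo L * state);
  trans_ok : forall q F q', In (q, F, q') trans -> fo_formula_n n F }.

Definition accepts L (M : structure L) n (A : automaton L n) (w : list (list (dom M))) : Prop :=
  exists run : nat -> state A,
    initial A (run 0) /\ final A (run (conv_len w)) /\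
    forall i, i < conv_len w ->
      exists F, In (run i, F, run (S i)) (trans A) /\ fo_sat M (conv_env w i) F.

Definition recognizable L (M : structure L) (n : nat) (R : list (list (dom M)) -> Prop) : Prop :=
  exists A : automaton L n, forall w, length w = n -> (R w <-> accepts M A w).

Inductive mso (L : rel_lang) : Type :=
| MLt : nat -> nat -> mso L
| MEq : nat -> nat -> mso L
| MIn : nat -> nat -> mso L
| MAlpha : fo L -> nat -> mso L
| MNot : mso L -> mso L
| MAnd : mso L -> mso L -> mso L
| MEx1 : nat -> mso L -> mso L
| MEx2 : nat -> mso L -> mso L.

Fixpoint mso_sat L (M : structure L) (w : list (list (dom M)))
    (e1 : nat -> nat) (e2 : nat -> nat -> Prop) (phi : mso L) : Prop :=
  match phi with
  | MLt _ x y => e1 x < e1 y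
  | MEq _ x y => e1 x = e1 y
  | MIn _ x X => e2 X (e1 x)
  | MAlpha F x => fo_sat M (conv_env w (e1 x)) F
  | MNot f => ~ mso_sat M w e1 e2 f
  | MAnd f g => mso_sat M w e1 e2 f /\ mso_sat M w e1 e2 g
  | MEx1 x f => exists p, p < conv_len w /\ mso_sat M w (upd e1 x p) e2 f
  | MEx2 X f => exists P : nat -> Prop, (forall p, P p -> p < conv_len w) /\
                  mso_sat M w e1 (upd e2 X P) f
  end.

Fixpoint mso_free1 L (phi : mso L) (x : nat) : Prop :=
  match phi with
  | MLt _ y z => x = y \/ x = z
  | MEq _ y z => x = y \/ x = z
  | MIn _ y _ => x = y
  | MAlpha _ y => x = y
  | MNot f => mso_free1 f x
  | MAnd f g => mso_free1 f x \/ mso_free1 g x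
  | MEx1 y f => x <> y /\ mso_free1 f x
  | MEx2 _ f => mso_free1 f x
  end.

Fixpoint mso_free2 L (phi : mso L) (X : nat) : Prop :=
  match phi with
  | MIn _ _ Y => X = Y
  | MLt _ _ _ | MEq _ _ _ | MAlpha _ _ => False
  | MNot f => mso_free2 f X
  | MAnd f g => mso_free2 f X \/ mso_free2 g X
  | MEx1 _ f => mso_free2 f X
  | MEx2 Y f => X <> Y /\ mso_free2 f X
  end.

Definition mso_sentence L (phi : mso L) : Prop :=
  (forall x, ~ mso_free1 phi x) /\ (forall X, ~ mso_free2 phi X).

Fixpoint mso_alpha_ok L (n : nat) (phi : mso L) : Prop :=
  match phi with
  | MAlpha F _ => fo_formula_n n F
  | MLt _ _ _ | MEq _ _ _ | MIn _ _ _ => True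
  | MNot f | MEx1 _ f | MEx2 _ f => mso_alpha_ok n f
  | MAnd f g => mso_alpha_ok n f /\ mso_alpha_ok n g
  end.

Definition mso_definable L (M : structure L) (n : nat) (R : list (list (dom M)) -> Prop) : Prop :=
  exists psi : mso L, mso_sentence psi /\ mso_alpha_ok n psi /\
    forall w, length w = n ->
      (R w <-> mso_sat M w (fun _ => 0) (fun _ _ => False) psi).

(* Main.v *)
Require Import Defs.
From Stdlib Require Import List Arith Lia Classical ClassicalEpsilon FunctionalExtensionality ProofIrrelevance.
Import ListNotations.
Set Implicit Arguments.

Section PartA.
Variable L : rel_lang.
Variable M : structure L.

Definition MOr (a b : mso L) := MNot (MAnd (MNot a) (MNot b)).
Definition MImp (a b : mso L) := MNot (MAnd a (MNot b)).
Definition MAll1 x (f : mso L) := MNot (MEx1 x (MNot f)).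
Definition MTrue : mso L := MNot (MEx1 0 (MNot (MEq L 0 0))).
Definition MFalse : mso L := MNot MTrue.
Definition constP (Q : Prop) : mso L :=
  if excluded_middle_informative Q then MTrue else MFalse.
Definition bigor (l : list (mso L)) := fold_right MOr MFalse l.
Definition bigand (l : list (mso L)) := fold_right (@MAnd L) MTrue l.

Section Sat.
Variable w : list (list (dom M)).
Lemma sat_or e1 e2 a b : mso_sat M w e1 e2 (MOr a b) <-> mso_sat M w e1 e2 a \/ mso_sat M w e1 e2 b.
Proof. simpl; tauto. Qed.
Lemma sat_imp e1 e2 a b : mso_sat M w e1 e2 (MImp a b) <-> (mso_sat M w e1 e2 a -> mso_sat M w e1 e2 b).
Proof. simpl; tauto. Qed.
Lemma sat_all1 e1 e2 x f : mso_sat M w e1 e2 (MAll1 x f) <->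
  forall p, p < conv_len w -> mso_sat M w (upd e1 x p) e2 f.
Proof. simpl; split.
  - intros H p Hp. apply NNPP; intro C; apply H; eauto.
  - intros H [p [Hp C]]; apply C; auto. Qed.
Lemma sat_true e1 e2 : mso_sat M w e1 e2 MTrue.
Proof. simpl. intros [p [_ C]]. apply C; reflexivity. Qed.
Lemma sat_false e1 e2 : ~ mso_sat M w e1 e2 MFalse.
Proof. intro C; apply C. apply sat_true. Qed.
Lemma sat_constP e1 e2 Q : mso_sat M w e1 e2 (constP Q) <-> Q.
Proof. unfold constP; destruct (excluded_middle_informative Q).
  - split; auto; intros; apply sat_true.
  - split; [intro H; exfalso; apply (sat_false H)|tauto]. Qed.
Lemma sat_bigor e1 e2 l : mso_sat M w e1 e2 (bigor l) <-> exists f, In f l /\ mso_sat M w e1 e2 f.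
Proof. induction l; simpl bigor.
  - split; [intro H; exfalso; apply (sat_false H)|intros [f [[] _]]].
  - rewrite sat_or, IHl. simpl. split.
    + intros [H|[f [H1 H2]]]; eauto.
    + intros [f [[<-|H1] H2]]; eauto. Qed.
Lemma sat_bigand e1 e2 l : mso_sat M w e1 e2 (bigand l) <-> forall f, In f l -> mso_sat M w e1 e2 f.
Proof. induction l; simpl bigand.
  - split; [intros _ f []|intros; apply sat_true].
  - change (mso_sat M w e1 e2 a /\ mso_sat M w e1 e2 (bigand l) <-> (forall f, In f (a::l) -> mso_sat M w e1 e2 f)).
    rewrite IHl. simpl. split.
    + intros [H1 H2] f [<-|H]; auto.
    + intros H; split; auto. Qed.
Lemma sat_bigor_map {T} e1 e2 (g : T -> mso L) l :
  mso_sat M w e1 e2 (bigor (map g l)) <-> exists a, In a l /\ mso_sat M w e1 e2 (g a).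
Proof. rewrite sat_bigor. split.
  - intros [f [H1 H2]]. apply in_map_iff in H1 as [a [<- H]]; eauto.
  - intros [a [H1 H2]]. exists (g a); split; auto. apply in_map; auto. Qed.
Lemma sat_bigand_map {T} e1 e2 (g : T -> mso L) l :
  mso_sat M w e1 e2 (bigand (map g l)) <-> forall a, In a l -> mso_sat M w e1 e2 (g a).
Proof. rewrite sat_bigand. split.
  - intros H a Ha. apply H. apply in_map; auto.
  - intros H f Hf. apply in_map_iff in Hf as [a [<- Ha]]; auto. Qed.
End Sat.

Lemma free1_true x : ~ mso_free1 MTrue x.
Proof. simpl. intros [H1 [H2|H2]]; auto. Qed.
Lemma free2_true X : ~ mso_free2 MTrue X.
Proof. simpl. auto. Qed.
Lemma free1_constP Q x : ~ mso_free1 (constP Q) x.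
Proof. unfold constP; destruct (excluded_middle_informative Q); simpl; intuition. Qed.
Lemma free2_constP Q x : ~ mso_free2 (constP Q) x.
Proof. unfold constP; destruct (excluded_middle_informative Q); simpl; auto. Qed.
Arguments free1_constP {Q x} _. Arguments free2_constP {Q x} _.
Lemma free1_bigor l x : mso_free1 (bigor l) x -> exists f, In f l /\ mso_free1 f x.
Proof. induction l; simpl.
  - intro H; exfalso; apply (free1_true H).
  - intros [H|H]; eauto. destruct (IHl H) as [f [? ?]]; eauto. Qed.
Lemma free2_bigor l x : mso_free2 (bigor l) x -> exists f, In f l /\ mso_free2 f x.
Proof. induction l; simpl.
  - tauto.
  - intros [H|H]; eauto. destruct (IHl H) as [f [? ?]]; eauto. Qed.
Lemma free1_bigand l x : mso_free1 (bigand l) x -> exists f, In f l /\ mso_free1 f x.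
Proof. induction l; simpl.
  - intro H; exfalso; apply (free1_true H).
  - intros [H|H]; eauto. destruct (IHl H) as [f [? ?]]; eauto. Qed.
Lemma free2_bigand l x : mso_free2 (bigand l) x -> exists f, In f l /\ mso_free2 f x.
Proof. induction l; simpl.
  - tauto.
  - intros [H|H]; eauto. destruct (IHl H) as [f [? ?]]; eauto. Qed.
Lemma alpha_bigor n l : (forall f, In f l -> mso_alpha_ok n f) -> mso_alpha_ok n (bigor l).
Proof. induction l; intros H; simpl; auto.
  assert (mso_alpha_ok n a) by (apply H; simpl; auto).
  assert (mso_alpha_ok n (fold_right _ _ l)) by (apply IHl; intros; apply H; simpl; auto).
  simpl in *; tauto. Qed.
Lemma alpha_bigand n l : (forall f, In f l -> mso_alpha_ok n f) -> mso_alpha_ok n (bigand l).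
Proof. induction l; intros H; simpl; auto.
  assert (mso_alpha_ok n a) by (apply H; simpl; auto).
  assert (mso_alpha_ok n (fold_right _ _ l)) by (apply IHl; intros; apply H; simpl; auto).
  simpl in *; tauto. Qed.
Lemma alpha_constP n Q : mso_alpha_ok n (constP Q).
Proof. unfold constP; destruct (excluded_middle_informative Q); simpl; auto. Qed.


Fixpoint exs2 (k : nat) (f : mso L) : mso L :=
  match k with 0 => f | S k => MEx2 k (exs2 k f) end.

Lemma sat_exs2 w k : forall e1 e2 f, mso_sat M w e1 e2 (exs2 k f) <->
  exists Q : nat -> nat -> Prop, (forall X p, X < k -> Q X p -> p < conv_len w) /\
    mso_sat M w e1 (fun X => if X <? k then Q X else e2 X) f.
Proof.
  induction k; intros e1 e2 f; simpl exs2.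
  - split.
    + intros H. exists (fun _ _ => False). split; [intros; lia|]. exact H.
    + intros [Q [_ H]]. exact H.
  - change (mso_sat M w e1 e2 (MEx2 k (exs2 k f))) with
      (exists P : nat -> Prop, (forall p, P p -> p < conv_len w) /\ mso_sat M w e1 (upd e2 k P) (exs2 k f)).
    split.
    + intros [P [HP H]]. apply IHk in H as [Q [HQ H]].
      exists (fun X => if X <? k then Q X else P). split.
      * intros X p HX. destruct (Nat.ltb_spec X k); eauto.
      * replace (fun X => if X <? S k then (if X <? k then Q X else P) else e2 X)
          with (fun X => if X <? k then Q X else upd e2 k P X); auto.
        apply functional_extensionality; intro X. unfold upd.
        destruct (Nat.ltb_spec X k), (Nat.ltb_spec X (S k)), (Nat.eqb_spec X k); auto; lia.
    + intros [Q [HQ H]]. exists (Q k). split; [intros; apply (HQ k); auto|].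
      apply IHk. exists Q. split; [intros; apply (HQ X); auto; lia|].
      replace (fun X => if X <? k then Q X else upd e2 k (Q k) X)
        with (fun X => if X <? S k then Q X else e2 X); auto.
      apply functional_extensionality; intro X. unfold upd.
      destruct (Nat.ltb_spec X k), (Nat.ltb_spec X (S k)), (Nat.eqb_spec X k); subst; auto; lia.
Qed.

Lemma free1_exs2 k f x : mso_free1 (exs2 k f) x -> mso_free1 f x.
Proof. induction k; simpl; auto. Qed.
Lemma free2_exs2 k f X : mso_free2 (exs2 k f) X -> k <= X /\ mso_free2 f X.
Proof. induction k; simpl; [intros; split; auto; lia|]. intros [H1 H2]. apply IHk in H2. split; [lia|tauto]. Qed.
Lemma alpha_exs2 n k f : mso_alpha_ok n f -> mso_alpha_ok n (exs2 k f).
Proof. induction k; simpl; auto. Qed.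

Fixpoint idx {St} (l : list St) (k : nat) : list (nat * St) :=
  match l with [] => [] | q :: l => (k, q) :: idx l (S k) end.
Lemma idx_lt {St} (l : list St) : forall k j q, In (j,q) (idx l k) -> k <= j < k + length l.
Proof. induction l; simpl; intros k j q H; [tauto|]. destruct H as [H|H].
  - inversion H; lia.
  - apply IHl in H; lia. Qed.
Lemma idx_In {St} (l : list St) : forall k j q, In (j,q) (idx l k) -> In q l.
Proof. induction l; simpl; intros k j q H; [tauto|]. destruct H as [H|H].
  - inversion H; auto.
  - right; eauto. Qed.
Lemma idx_in {St} (l : list St) : forall k q, In q l -> exists j, In (j,q) (idx l k).
Proof. induction l; simpl; intros k q H; [tauto|]. destruct H as [<-|H].
  - eauto.
  - destruct (IHl (Datatypes.S k) q H) as [j Hj]; eauto. Qed.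
Lemma idx_uniq {St} (l : list St) : forall k j q q', In (j,q) (idx l k) -> In (j,q') (idx l k) -> q = q'.
Proof. induction l; simpl; intros k j q q' H H'; [tauto|]. destruct H as [H|H], H' as [H'|H'].
  - inversion H; inversion H'; subst; auto.
  - inversion H; subst. apply idx_lt in H'; lia.
  - inversion H'; subst. apply idx_lt in H; lia.
  - eauto. Qed.

Section Aut.
Variable n : nat.
Variable A : automaton L n.
Variable l : list (state A).

Definition Tf (q q' : state A) (x : nat) : mso L :=
  bigor (map (fun t => MAnd (constP (fst (fst t) = q /\ snd t = q')) (MAlpha (snd (fst t)) x)) (trans A)).

Lemma sat_T w e1 e2 q q' x : mso_sat M w e1 e2 (Tf q q' x) <->
  exists F, In (q,F,q') (trans A) /\ fo_sat M (conv_env w (e1 x)) F.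
Proof. unfold Tf. rewrite sat_bigor_map. split.
  - intros [[[p F] p'] [H1 [H2 H3]]]. apply sat_constP in H2. simpl in *. destruct H2; subst; eauto.
  - intros [F [H1 H2]]. exists (q,F,q'). split; auto. split; auto. apply sat_constP; auto. Qed.

Definition JL := idx l 0.
Definition C1 := MAll1 0 (bigor (map (fun jq => MIn L 0 (fst jq)) JL)).
Definition C2 := MAll1 0 (MImp (MNot (MEx1 1 (MLt L 1 0))) (bigand (map (fun jq => MImp (MIn L 0 (fst jq)) (bigor (map (fun q => MAnd (constP (initial A q)) (Tf q (snd jq) 0)) l))) JL))).
Definition C3 := MAll1 0 (MAll1 1 (MImp (MAnd (MLt L 0 1) (MNot (MEx1 2 (MAnd (MLt L 0 2) (MLt L 2 1))))) (bigand (map (fun jq => bigand (map (fun jq' => MImp (MAnd (MIn L 0 (fst jq)) (MIn L 1 (fst jq'))) (Tf (snd jq) (snd jq') 1)) JL)) JL)))).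
Definition C4 := MAll1 0 (MImp (MNot (MEx1 1 (MLt L 0 1))) (bigand (map (fun jq => MImp (MIn L 0 (fst jq)) (constP (final A (snd jq)))) JL))).

Section Cl.
Variable w : list (list (dom M)).
Variable e1 : nat -> nat.
Variable E : nat -> nat -> Prop.
Notation m := (conv_len w).

Lemma sat_C1 : mso_sat M w e1 E C1 <-> forall p, p < m -> exists jq, In jq JL /\ E (fst jq) p.
Proof. unfold C1. rewrite sat_all1. setoid_rewrite sat_bigor_map. reflexivity. Qed.

Lemma sat_C2 : mso_sat M w e1 E C2 <-> forall p, p < m -> (~ exists p', p' < m /\ p' < p) ->
  forall jq, In jq JL -> E (fst jq) p -> exists q, In q l /\ initial A q /\
    exists F, In (q,F,snd jq) (trans A) /\ fo_sat M (conv_env w p) F.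
Proof. unfold C2. rewrite sat_all1. setoid_rewrite sat_imp. setoid_rewrite sat_bigand_map.
  setoid_rewrite sat_imp. setoid_rewrite sat_bigor_map.
  split; intros H p Hp H1; specialize (H p Hp); cbn in H |- *.
  - intros jq Hjq H2. destruct (H H1 jq Hjq H2) as [q [Hq [H3 H4]]].
    apply sat_constP in H3. apply sat_T in H4. eauto.
  - intros jq Hjq H2. destruct (H H1 jq Hjq H2) as [q [Hq [H3 H4]]].
    exists q; split; auto. split; [apply sat_constP; auto|]. apply sat_T. exact H4.
Qed.

Lemma sat_C3 : mso_sat M w e1 E C3 <-> forall p p', p < m -> p' < m -> p < p' ->
  (~ exists r, r < m /\ p < r /\ r < p') ->
  forall jq jq', In jq JL -> In jq' JL -> E (fst jq) p -> E (fst jq') p' ->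
  exists F, In (snd jq, F, snd jq') (trans A) /\ fo_sat M (conv_env w p') F.
Proof. unfold C3. rewrite sat_all1. setoid_rewrite sat_all1. setoid_rewrite sat_imp.
  setoid_rewrite sat_bigand_map. setoid_rewrite sat_bigand_map. setoid_rewrite sat_imp.
  setoid_rewrite sat_T.
  split; intros H p p' Hp Hp'; specialize (H p Hp p' Hp'); cbn in H |- *.
  - intros H1 H2 jq jq' Hjq Hjq' H3 H4. apply (H (conj H1 H2) jq Hjq jq' Hjq' (conj H3 H4)).
  - intros [H1 H2] jq Hjq jq' Hjq' [H3 H4]. apply (H H1 H2 jq jq' Hjq Hjq' H3 H4).
Qed.

Lemma sat_C4 : mso_sat M w e1 E C4 <-> forall p, p < m -> (~ exists p', p' < m /\ p < p') ->
  forall jq, In jq JL -> E (fst jq) p -> final A (snd jq).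
Proof. unfold C4. rewrite sat_all1. setoid_rewrite sat_imp. setoid_rewrite sat_bigand_map.
  setoid_rewrite sat_imp. setoid_rewrite sat_constP. reflexivity. Qed.
End Cl.

Lemma free1_T q q' y x : mso_free1 (Tf q q' y) x -> x = y.
Proof. unfold Tf. intro H. apply free1_bigor in H as [f [H1 H2]].
  apply in_map_iff in H1 as [t [<- _]]. simpl in H2. destruct H2 as [H2|H2]; auto.
  exfalso; apply (free1_constP H2). Qed.
Lemma free2_T q q' y X : ~ mso_free2 (Tf q q' y) X.
Proof. unfold Tf. intro H. apply free2_bigor in H as [f [H1 H2]].
  apply in_map_iff in H1 as [t [<- _]]. simpl in H2. destruct H2 as [H2|H2]; auto.
  exact (free2_constP H2). Qed.
Lemma alpha_T q q' y : mso_alpha_ok n (Tf q q' y).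
Proof. unfold Tf. apply alpha_bigor. intros f Hf. apply in_map_iff in Hf as [[[p F] p'] [<- Ht]].
  simpl. split; [apply alpha_constP|]. eapply trans_ok; eauto. Qed.

Lemma JL_lt jq : In jq JL -> fst jq < length l.
Proof. destruct jq as [j q]; intro H; apply idx_lt in H; simpl; lia. Qed.

Lemma free_C1 x : ~ mso_free1 C1 x.
Proof. unfold C1. simpl. intros [H0 H]. apply free1_bigor in H as [f [H1 H2]].
  apply in_map_iff in H1 as [jq [<- _]]. simpl in H2. auto. Qed.
Lemma free_C2 x : ~ mso_free1 C2 x.
Proof. unfold C2. simpl. intros [H0 [[H1 [H|H]]|H]]; auto.
  apply free1_bigand in H as [f [H1 H2]].
  apply in_map_iff in H1 as [jq [<- _]]. simpl in H2. destruct H2 as [H2|H2]; auto.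
  apply free1_bigor in H2 as [f [H1 H2]].
  apply in_map_iff in H1 as [q [<- _]]. simpl in H2. destruct H2 as [H2|H2].
  - exact (free1_constP H2).
  - apply free1_T in H2; auto. Qed.
Lemma free_C3 x : ~ mso_free1 C3 x.
Proof. unfold C3. simpl. intros [H0 [H0' [[[H|H]|[H1 [[H|H]|[H|H]]]]|H]]]; auto.
  apply free1_bigand in H as [f [H1 H2]].
  apply in_map_iff in H1 as [jq [<- _]].
  apply free1_bigand in H2 as [f [H1 H2]].
  apply in_map_iff in H1 as [jq' [<- _]]. simpl in H2. destruct H2 as [[H2|H2]|H2]; auto.
  apply free1_T in H2; auto. Qed.
Lemma free_C4 x : ~ mso_free1 C4 x.
Proof. unfold C4. simpl. intros [H0 [[H1 [H|H]]|H]]; auto.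
  apply free1_bigand in H as [f [H1 H2]].
  apply in_map_iff in H1 as [jq [<- _]]. simpl in H2. destruct H2 as [H2|H2]; auto.
  exact (free1_constP H2). Qed.

Ltac f2tac := repeat match goal with
  | H : mso_free2 (bigand _) _ |- _ => apply free2_bigand in H as [? [? ?]]
  | H : mso_free2 (bigor _) _ |- _ => apply free2_bigor in H as [? [? ?]]
  | H : In _ (map _ _) |- _ => apply in_map_iff in H as [? [? ?]]; subst
  | H : mso_free2 (constP _) _ |- _ => exfalso; exact (free2_constP H)
  | H : mso_free2 (Tf _ _ _) _ |- _ => exfalso; exact (free2_T _ _ _ _ H)
  | H : _ \/ _ |- _ => destruct H
  | H : _ /\ _ |- _ => destruct H
  | H : False |- _ => destruct H
  | H : ?X = fst ?jq, H' : In ?jq JL |- _ => subst X; apply JL_lt; exact H'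
  | H : mso_free2 _ _ |- _ => progress simpl in H
  end.

Lemma free2_Cs X : mso_free2 (MAnd C1 (MAnd C2 (MAnd C3 C4))) X -> X < length l.
Proof. unfold C1, C2, C3, C4. intro H. simpl in H. f2tac. Qed.

Lemma alpha_Cs : mso_alpha_ok n (MAnd C1 (MAnd C2 (MAnd C3 C4))).
Proof. unfold C1, C2, C3, C4. simpl. repeat split; auto;
  repeat (first [apply alpha_bigand | apply alpha_bigor]; intros ? Hf; apply in_map_iff in Hf as [? [<- ?]]; simpl; repeat split; auto);
  try apply alpha_T; try apply alpha_constP.
  all: match goal with x1 : state A * fo L * state A |- _ => destruct x1 as [[? ?] ?]; eapply trans_ok; eauto end. Qed.

Definition NE : mso L := MEx1 0 MTrue.
Definition PSI := MOr (MAnd (MNot NE) (constP (exists q, initial A q /\ final A q)))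
   (MAnd NE (exs2 (length l) (MAnd C1 (MAnd C2 (MAnd C3 C4))))).

Lemma PSI_sentence : mso_sentence PSI.
Proof. split; intros x H; unfold PSI, MOr, NE, MTrue in H; cbn [mso_free1 mso_free2] in H.
  - destruct H as [[[H0 [H1 [H2|H2]]]|H]|[[H0 [H1 [H2|H2]]]|H]]; auto.
    + exact (free1_constP H).
    + apply free1_exs2 in H. cbn [mso_free1] in H.
      destruct H as [H|[H|[H|H]]]; [eapply free_C1|eapply free_C2|eapply free_C3|eapply free_C4]; eauto.
  - destruct H as [[H|H]|[H|H]]; auto.
    + exact (free2_constP H).
    + apply free2_exs2 in H as [H1 H2]. apply free2_Cs in H2. lia.
Qed.

Lemma PSI_alpha : mso_alpha_ok n PSI.
Proof. unfold PSI, MOr, NE, MTrue. cbn [mso_alpha_ok]. repeat split; auto.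
  - apply alpha_constP.
  - apply alpha_exs2. apply alpha_Cs. Qed.

Hypothesis Hl : forall q, In q l.

Lemma PSI_sem w e1 e2 : mso_sat M w e1 e2 PSI <-> accepts M A w.
Proof.
  assert (HNE : forall e1 e2, mso_sat M w e1 e2 NE <-> 0 < conv_len w).
  { intros. unfold NE. cbn [mso_sat]. split.
    - intros [p [Hp _]]; lia.
    - intros H; exists 0; split; auto; apply sat_true. }
  unfold PSI. rewrite sat_or. cbn [mso_sat]. rewrite !HNE, sat_constP, sat_exs2.
  split.
  - intros [[H1 [q [Hq1 Hq2]]]|[H1 [Q [HQ H]]]].
    + exists (fun _ => q). split; auto. split; auto. intros; lia.
    + cbn [mso_sat] in H. destruct H as [H1' [H2 [H3 H4]]].
      set (E := fun X => if X <? length l then Q X else e2 X) in *.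
      assert (HE : forall jq, In jq JL -> E (fst jq) = Q (fst jq)).
      { intros jq Hjq. unfold E. apply JL_lt in Hjq. destruct (Nat.ltb_spec (fst jq) (length l)); auto; lia. }
      rewrite sat_C1 in H1'. rewrite sat_C2 in H2. rewrite sat_C3 in H3. rewrite sat_C4 in H4.
      destruct (H1' 0 H1) as [jd _].
      assert (Hex : forall p, exists q, p < conv_len w -> exists j, In (j,q) JL /\ Q j p).
      { intro p. destruct (lt_dec p (conv_len w)) as [Hp|Hp].
        - destruct (H1' p Hp) as [[j q] [Hjq Hq]]. exists q; intros _. exists j; split; auto.
          rewrite (HE (j,q)) in Hq; auto.
        - exists (snd jd); intros; lia. }
      pose (ch := fun p => proj1_sig (constructive_indefinite_description _ (Hex p))).
      assert (Hch : forall p, p < conv_len w -> exists j, In (j, ch p) JL /\ Q j p).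
      { intros p Hp. exact (proj2_sig (constructive_indefinite_description _ (Hex p)) Hp). }
      destruct (Hch 0 H1) as [j0 [Hj0 Hq0]].
      destruct (H2 0 H1 ltac:(intros [p' [_ Hp']]; lia) (j0, ch 0) Hj0 ltac:(rewrite HE; auto))
        as [q0 [_ [Hq0i [F0 [HF0 HF0']]]]].
      exists (fun i => match i with 0 => q0 | S p => ch p end).
      split; [exact Hq0i|]. split.
      * assert (Em : conv_len w = S (conv_len w - 1)) by lia. rewrite Em.
        set (m' := conv_len w - 1).
        destruct (Hch m' ltac:(lia)) as [j [Hj HQj]].
        apply (H4 m' ltac:(lia) ltac:(intros [p' [Hp' Hp'']]; lia) (j, ch m') Hj).
        rewrite HE; auto.
      * intros [|p] Hp.
        -- exists F0; auto.
        -- destruct (Hch p ltac:(lia)) as [j [Hj HQj]].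
           destruct (Hch (S p) Hp) as [j' [Hj' HQj']].
           apply (H3 p (S p) ltac:(lia) Hp ltac:(lia) ltac:(intros [r [_ [Hr Hr']]]; lia)
             (j, ch p) (j', ch (S p)) Hj Hj'); rewrite HE; auto.
  - intros [run [Hi [Hf Ht]]].
    destruct (Nat.eq_dec (conv_len w) 0) as [Hm|Hm].
    + left. split; [lia|]. exists (run 0). split; auto. rewrite Hm in Hf. auto.
    + right. split; [lia|].
      exists (fun j p => p < conv_len w /\ In (j, run (S p)) JL). split; [intros X p _ [Hp _]; exact Hp|].
      set (E := fun X => if X <? length l then (fun p => p < conv_len w /\ In (X, run (S p)) JL) else e2 X).
      assert (HE : forall jq, In jq JL -> forall p, E (fst jq) p <-> p < conv_len w /\ snd jq = run (S p)).
      { intros [j q] Hjq p. unfold E. pose proof (JL_lt _ Hjq) as Hlt. simpl in Hlt |- *.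
        destruct (Nat.ltb_spec j (length l)); [|lia]. split.
        - intros [Hp Hr]. split; auto. eapply idx_uniq; eauto.
        - intros [Hp ->]. auto. }
      cbn [mso_sat]. rewrite sat_C1, sat_C2, sat_C3, sat_C4. split; [|split; [|split]].
      * intros p Hp. destruct (@idx_in _ l 0 _ (Hl (run (S p)))) as [j Hj]. exists (j, run (S p)).
        split; auto. apply HE; auto.
      * intros p Hp Hno jq Hjq HEq. apply HE in HEq as [_ Heq]; auto.
        assert (p = 0). { destruct p; auto. exfalso; apply Hno; exists 0; lia. } subst p.
        exists (run 0). split; auto. split; auto. rewrite Heq. apply Ht. lia.
      * intros p p' Hp Hp' Hpp Hno jq jq' Hjq Hjq' HEq HEq'.
        apply HE in HEq as [_ Heq]; auto. apply HE in HEq' as [_ Heq']; auto.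
        assert (p' = S p). { destruct (Nat.eq_dec p' (S p)); auto. exfalso; apply Hno; exists (S p); lia. }
        subst p'. rewrite Heq, Heq'. apply Ht. auto.
      * intros p Hp Hno jq Hjq HEq. apply HE in HEq as [_ Heq]; auto.
        assert (S p = conv_len w). { destruct (Nat.eq_dec (S p) (conv_len w)); auto. exfalso; apply Hno; exists (S p); lia. }
        rewrite Heq, H. exact Hf.
Qed.
End Aut.

Theorem rec_def n (R : list (list (dom M)) -> Prop) : recognizable M n R -> mso_definable M n R.
Proof.
  intros [A HA]. destruct (state_finite A) as [l Hl].
  exists (PSI A l). split; [apply PSI_sentence|]. split; [apply PSI_alpha|].
  intros w Hw. rewrite (HA w Hw). symmetry. apply PSI_sem; auto.
Qed.
End PartA.



Fixpoint sublists {T} (l : list T) : list (list T) :=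
  match l with [] => [[]] | a :: l => map (cons a) (sublists l) ++ sublists l end.
Lemma sublists_incl {T} (l : list T) : forall s, In s (sublists l) -> forall x, In x s -> In x l.
Proof. induction l; simpl; intros s Hs x Hx.
  - destruct Hs as [<-|[]]; destruct Hx.
  - apply in_app_or in Hs as [Hs|Hs].
    + apply in_map_iff in Hs as [s' [<- Hs']]. destruct Hx as [<-|Hx]; eauto.
    + eauto. Qed.
Arguments sublists_incl {T l s} _ {x} _.
Lemma sublists_sel {T} (Q : T -> Prop) (l : list T) :
  exists s, In s (sublists l) /\ forall x, In x s <-> In x l /\ Q x.
Proof. induction l as [|a l IH]; simpl.
  - exists []; split; auto. intros x; simpl; tauto.
  - destruct IH as [s [Hs Hx]]. destruct (classic (Q a)) as [Ha|Ha].
    + exists (a::s). split. { apply in_or_app; left; apply in_map; auto. }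
      intro x; simpl; rewrite Hx. split; [intros [<-|H]; [split; auto|tauto]|]. intros [[<-|H] HQ]; auto.
    + exists s. split. { apply in_or_app; right; auto. }
      intro x; simpl; rewrite Hx. split; [tauto|]. intros [[<-|H] HQ]; [contradiction|auto]. Qed.

Section PartB.
Variable L : rel_lang.
Variable M : structure L.

Record letter := mkL { env : nat -> option (dom M); m1 : nat -> bool; m2 : nat -> Prop }.
Definition dl := mkL (fun _ => None) (fun _ => false) (fun _ => False).

Definition equivL (A B : list letter -> Prop) := forall U, A U <-> B U.
Definition res (c : letter) (A : list letter -> Prop) := fun U => A (c :: U).

Inductive lp := LFo (F : fo L) | LM1 (x : nat) | LM2 (X : nat).
Definition peval (p : lp) (c : letter) : Prop :=
  match p with LFo F => fo_sat M (env c) F | LM1 x => m1 c x = true | LM2 X => m2 c X end.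
Definition agree (P : list lp) c c' := forall p, In p P -> (peval p c <-> peval p c').

Definition Reg (P : list lp) (Lg : list letter -> Prop) :=
  exists Fam : list (list letter -> Prop),
    (exists A, In A Fam /\ equivL Lg A) /\
    (forall A, In A Fam -> forall c, exists B, In B Fam /\ equivL (res c A) B) /\
    (forall A, In A Fam -> forall c c', agree P c c' -> equivL (res c A) (res c' A)).

Lemma Reg_ext P L1 L2 : equivL L1 L2 -> Reg P L1 -> Reg P L2.
Proof. intros H [Fam [[A [HA HA']] HF]]. exists Fam. split; auto. exists A; split; auto.
  intro U; rewrite <- (H U); auto. Qed.

Lemma Reg_mono P P' Lg : incl P P' -> Reg P Lg -> Reg P' Lg.
Proof. intros Hi [Fam [H1 [H2 H3]]]. exists Fam; split; auto; split; auto.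
  intros A HA c c' Hc. apply H3; auto. intros p Hp; apply Hc; auto. Qed.

Lemma Reg_atom P Lg : (forall c, equivL (res c Lg) Lg \/ equivL (res c Lg) (fun _ => True) \/ equivL (res c Lg) (fun _ => False)) ->
  (forall c c', agree P c c' -> equivL (res c Lg) (res c' Lg)) -> Reg P Lg.
Proof. intros H1 H2. exists [Lg; (fun _ => True); (fun _ => False)]. split; [|split].
  - exists Lg; split; [simpl; auto|intro; tauto].
  - intros A [<-|[<-|[<-|[]]]] c.
    + destruct (H1 c) as [H|[H|H]]; eexists; split; [| exact H| |exact H| |exact H]; simpl; auto.
    + exists (fun _ => True); split; [simpl; auto|intro; unfold res; tauto].
    + exists (fun _ => False); split; [simpl; auto|intro; unfold res; tauto].
  - intros A [<-|[<-|[<-|[]]]] c c' Hc; auto; intro; unfold res; tauto. Qed.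

Lemma Reg_not P Lg : Reg P Lg -> Reg P (fun U => ~ Lg U).
Proof. intros [Fam [[A0 [H0 H0']] [Hcl Hag]]].
  exists (map (fun A U => ~ A U) Fam). split; [|split].
  - exists (fun U => ~ A0 U). split; [apply (in_map (fun A U => ~ A U)); auto|]. intro U; rewrite (H0' U); tauto.
  - intros A' HA' c. apply in_map_iff in HA' as [A [<- HA]].
    destruct (Hcl A HA c) as [B [HB HB']]. exists (fun U => ~ B U). split; [apply (in_map (fun A U => ~ A U)); auto|].
    intro U; unfold res in *; rewrite (HB' U); tauto.
  - intros A' HA' c c' Hc. apply in_map_iff in HA' as [A [<- HA]].
    intro U. specialize (Hag A HA c c' Hc U). unfold res in *. rewrite Hag; tauto. Qed.

Lemma Reg_and P1 P2 L1 L2 : Reg P1 L1 -> Reg P2 L2 -> Reg (P1 ++ P2) (fun U => L1 U /\ L2 U).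
Proof. intros [F1 [[A1 [H1 H1']] [Hcl1 Hag1]]] [F2 [[A2 [H2 H2']] [Hcl2 Hag2]]].
  exists (map (fun pr U => fst pr U /\ snd pr U) (list_prod F1 F2)). split; [|split].
  - exists (fun U => A1 U /\ A2 U). split.
    + apply (in_map (fun pr U => fst pr U /\ snd pr U) _ (A1, A2)). apply in_prod; auto.
    + intro U; rewrite (H1' U), (H2' U); tauto.
  - intros A' HA' c. apply in_map_iff in HA' as [[B1 B2] [<- HB]]. apply in_prod_iff in HB as [HB1 HB2].
    destruct (Hcl1 B1 HB1 c) as [C1 [HC1 HC1']]. destruct (Hcl2 B2 HB2 c) as [C2 [HC2 HC2']].
    exists (fun U => C1 U /\ C2 U). split.
    + apply (in_map (fun pr U => fst pr U /\ snd pr U) _ (C1, C2)). apply in_prod; auto.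
    + intro U; unfold res in *; simpl; rewrite (HC1' U), (HC2' U); tauto.
  - intros A' HA' c c' Hc. apply in_map_iff in HA' as [[B1 B2] [<- HB]]. apply in_prod_iff in HB as [HB1 HB2].
    assert (Ha1 : agree P1 c c') by (intros p Hp; apply Hc; apply in_or_app; auto).
    assert (Ha2 : agree P2 c c') by (intros p Hp; apply Hc; apply in_or_app; auto).
    intro U. specialize (Hag1 B1 HB1 c c' Ha1 U). specialize (Hag2 B2 HB2 c c' Ha2 U).
    unfold res in *; simpl in *. rewrite Hag1, Hag2; tauto. Qed.

Definition setm1 y (b : bool) c := mkL (env c) (fun z => if Nat.eqb z y then b else m1 c z) (m2 c).
Definition setm2 X (b : Prop) c := mkL (env c) (m1 c) (fun Z => if Nat.eqb Z X then b else m2 c Z).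
Fixpoint remark y U p i := match U with [] => [] | c::U => setm1 y (Nat.eqb i p) c :: remark y U p (S i) end.
Fixpoint reset X U (Pr : nat -> Prop) i := match U with [] => [] | c::U => setm2 X (Pr i) c :: reset X U Pr (S i) end.

Lemma remark_shift y U : forall p i, remark y U (S p) (S i) = remark y U p i.
Proof. induction U; simpl; intros; auto. rewrite IHU; auto. Qed.
Lemma remark_0 y U : forall i j, remark y U 0 (S i) = remark y U 0 (S j).
Proof. induction U; simpl; intros; auto. rewrite (IHU (S i) (S j)); auto. Qed.
Lemma reset_shift X U : forall Pr i, reset X U Pr (S i) = reset X U (fun j => Pr (S j)) i.
Proof. induction U; simpl; intros; auto. rewrite IHU; auto. Qed.
Lemma length_remark y U : forall p i, length (remark y U p i) = length U.
Proof. induction U; simpl; auto. Qed.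
Lemma length_reset X U : forall Pr i, length (reset X U Pr i) = length U.
Proof. induction U; simpl; auto. Qed.

Lemma agree_setm1 P y b c c' : agree P c c' -> agree P (setm1 y b c) (setm1 y b c').
Proof. intros H p Hp. specialize (H p Hp). destruct p; simpl in *; auto.
  destruct (x =? y); tauto. Qed.
Lemma agree_setm2 P X b c c' : agree P c c' -> agree P (setm2 X b c) (setm2 X b c').
Proof. intros H p Hp. specialize (H p Hp). destruct p; simpl in *; auto.
  destruct (X0 =? X); tauto. Qed.
Lemma agree_setm2T P X (b : Prop) c : b -> agree P (setm2 X b c) (setm2 X True c).
Proof. intros H p Hp. destruct p; simpl; try tauto. destruct (X0 =? X); tauto. Qed.
Lemma agree_setm2F P X (b : Prop) c : ~ b -> agree P (setm2 X b c) (setm2 X False c).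
Proof. intros H p Hp. destruct p; simpl; try tauto. destruct (X0 =? X); tauto. Qed.

Lemma Reg_ex1 P y Lf : Reg P Lf -> Reg P (fun U => exists p, p < length U /\ Lf (remark y U p 0)).
Proof.
  intros [Fam [[A0 [H0 H0']] [Hcl Hag]]].
  set (G := fun (Sx Tx : list (list letter -> Prop)) (U : list letter) =>
    (exists A, In A Sx /\ A (remark y U 0 1)) \/ (exists A, In A Tx /\ exists p, p < length U /\ A (remark y U p 0))).
  assert (Gc : forall Sx Tx c U, G Sx Tx (c::U) <->
    (exists A, In A Sx /\ A (setm1 y false c :: remark y U 0 1)) \/
    (exists A, In A Tx /\ A (setm1 y true c :: remark y U 0 1)) \/
    (exists A, In A Tx /\ exists p, p < length U /\ A (setm1 y false c :: remark y U p 0))).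
  { intros. unfold G. simpl remark. rewrite (remark_0 y U 1 0). split.
    - intros [H|[A [HA [p [Hp H]]]]]; [left; exact H|right]. destruct p as [|p].
      + left; eauto.
      + right. exists A; split; auto. exists p; split; [simpl in Hp; lia|]. simpl in H. rewrite remark_shift in H; exact H.
    - intros [H|[[A [HA H]]|[A [HA [p [Hp H]]]]]]; [left; exact H| |]; right; exists A; split; auto.
      + exists 0; split; [simpl; lia|exact H].
      + exists (S p); split; [simpl; lia|]. simpl. rewrite remark_shift; exact H. }
  exists (map (fun st => G (fst st) (snd st)) (list_prod (sublists Fam) (sublists Fam))).
  split; [|split].
  - destruct (sublists_sel (fun _ => False) Fam) as [S0 [HS0 HS0']].
    destruct (sublists_sel (fun B => B = A0) Fam) as [T0 [HT0 HT0']].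
    exists (G S0 T0). split.
    { apply (in_map (fun st => G (fst st) (snd st)) _ (S0, T0)); apply in_prod; auto. }
    intro U. unfold G. split.
    + intros [p [Hp H]]. right. exists A0. split; [apply HT0'; auto|]. exists p; split; auto. apply H0'; auto.
    + intros [[A [HA _]]|[A [HA [p [Hp H]]]]]; [apply HS0' in HA; tauto|].
      apply HT0' in HA as [_ ->]. exists p; split; auto; apply H0'; auto.
  - intros A' HA' c. apply in_map_iff in HA' as [[Sx Tx] [<- HST]]. apply in_prod_iff in HST as [HS HT]. simpl.
    set (c0 := setm1 y false c). set (c1 := setm1 y true c).
    destruct (sublists_sel (fun B => (exists A, In A Sx /\ equivL (res c0 A) B) \/ (exists A, In A Tx /\ equivL (res c1 A) B)) Fam) as [Sx' [HS' HS'x]].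
    destruct (sublists_sel (fun B => exists A, In A Tx /\ equivL (res c0 A) B) Fam) as [Tx' [HT' HT'x]].
    exists (G Sx' Tx'). split.
    { apply (in_map (fun st => G (fst st) (snd st)) _ (Sx', Tx')); apply in_prod; auto. }
    intro U. unfold res at 1. rewrite Gc. unfold G. split.
    + intros [[A [HA H]]|[[A [HA H]]|[A [HA [p [Hp H]]]]]].
      * left. destruct (Hcl A (sublists_incl HS HA) c0) as [B [HB HB']]. exists B.
        split; [apply HS'x; split; auto; left; eauto|]. apply HB'. exact H.
      * left. destruct (Hcl A (sublists_incl HT HA) c1) as [B [HB HB']]. exists B.
        split; [apply HS'x; split; auto; right; eauto|]. apply HB'. exact H.
      * right. destruct (Hcl A (sublists_incl HT HA) c0) as [B [HB HB']]. exists B.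
        split; [apply HT'x; split; eauto|]. exists p; split; auto. apply HB'; exact H.
    + intros [[B [HB H]]|[B [HB [p [Hp H]]]]].
      * apply HS'x in HB as [_ [[A [HA HAB]]|[A [HA HAB]]]].
        -- left; exists A; split; auto; apply HAB; auto.
        -- right; left; exists A; split; auto; apply HAB; auto.
      * apply HT'x in HB as [_ [A [HA HAB]]].
        right; right; exists A; split; auto; exists p; split; auto; apply HAB; auto.
  - intros A' HA' c c' Hc. apply in_map_iff in HA' as [[Sx Tx] [<- HST]]. apply in_prod_iff in HST as [HS HT]. simpl.
    assert (Ha0 : agree P (setm1 y false c) (setm1 y false c')) by (apply agree_setm1; exact Hc).
    assert (Ha1 : agree P (setm1 y true c) (setm1 y true c')) by (apply agree_setm1; exact Hc).
    assert (E0 : forall A, In A Fam -> forall V, A (setm1 y false c :: V) <-> A (setm1 y false c' :: V))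
      by (intros A HA V; exact (Hag A HA _ _ Ha0 V)).
    assert (E1 : forall A, In A Fam -> forall V, A (setm1 y true c :: V) <-> A (setm1 y true c' :: V))
      by (intros A HA V; exact (Hag A HA _ _ Ha1 V)).
    intro U. unfold res. rewrite !Gc. split.
    + intros [[A [HA H]]|[[A [HA H]]|[A [HA [p [Hp H]]]]]].
      * left; exists A; split; auto. apply E0; auto. exact (sublists_incl HS HA).
      * right; left; exists A; split; auto. apply E1; auto. exact (sublists_incl HT HA).
      * right; right; exists A; split; auto. exists p; split; auto. apply E0; auto. exact (sublists_incl HT HA).
    + intros [[A [HA H]]|[[A [HA H]]|[A [HA [p [Hp H]]]]]].
      * left; exists A; split; auto. apply (E0 A (sublists_incl HS HA)); auto.
      * right; left; exists A; split; auto. apply (E1 A (sublists_incl HT HA)); auto.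
      * right; right; exists A; split; auto. exists p; split; auto. apply (E0 A (sublists_incl HT HA)); auto.
Qed.

Lemma Reg_ex2 P X Lf : Reg P Lf -> Reg P (fun U => exists Pr, Lf (reset X U Pr 0)).
Proof.
  intros [Fam [[A0 [H0 H0']] [Hcl Hag]]].
  set (G := fun (Sx : list (list letter -> Prop)) (U : list letter) =>
    exists A, In A Sx /\ exists Pr, A (reset X U Pr 0)).
  assert (Gc : forall Sx, incl Sx Fam -> forall c U, G Sx (c::U) <->
    exists A, In A Sx /\ exists Pr, A (setm2 X True c :: reset X U Pr 0) \/ A (setm2 X False c :: reset X U Pr 0)).
  { intros Sx HS c U. unfold G. simpl reset. split.
    - intros [A [HA [Pr H]]]. exists A; split; auto. exists (fun j => Pr (S j)).
      rewrite reset_shift in H. destruct (classic (Pr 0)) as [Hp|Hp].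
      + left. apply (Hag A (HS A HA) _ _ (agree_setm2T P X c Hp)); exact H.
      + right. apply (Hag A (HS A HA) _ _ (agree_setm2F P X c Hp)); exact H.
    - intros [A [HA [Pr [H|H]]]]; exists A; split; auto.
      + exists (fun j => match j with 0 => True | S j => Pr j end). rewrite reset_shift.
        apply (Hag A (HS A HA) _ _ (agree_setm2T P X c I)); exact H.
      + exists (fun j => match j with 0 => False | S j => Pr j end). rewrite reset_shift.
        apply (Hag A (HS A HA) _ _ (agree_setm2F P X c (fun x => x))); exact H. }
  exists (map G (sublists Fam)). split; [|split].
  - destruct (sublists_sel (fun B => B = A0) Fam) as [S0 [HS0 HS0']].
    exists (G S0). split; [apply in_map; auto|].
    intro U. unfold G. split.
    + intros [Pr H]. exists A0. split; [apply HS0'; auto|]. exists Pr; apply H0'; auto.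
    + intros [A [HA [Pr H]]]. apply HS0' in HA as [_ ->]. exists Pr; apply H0'; auto.
  - intros A' HA' c. apply in_map_iff in HA' as [Sx [<- HS]].
    set (cT := setm2 X True c). set (cF := setm2 X False c).
    destruct (sublists_sel (fun B => exists A, In A Sx /\ (equivL (res cT A) B \/ equivL (res cF A) B)) Fam) as [Sx' [HS' HS'x]].
    exists (G Sx'). split; [apply in_map; auto|].
    intro U. unfold res at 1. rewrite Gc by (intros x Hx; exact (sublists_incl HS Hx)). unfold G. split.
    + intros [A [HA [Pr [H|H]]]].
      * destruct (Hcl A (sublists_incl HS HA) cT) as [B [HB HB']]. exists B.
        split; [apply HS'x; split; eauto|]. exists Pr. apply HB'. exact H.
      * destruct (Hcl A (sublists_incl HS HA) cF) as [B [HB HB']]. exists B.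
        split; [apply HS'x; split; eauto|]. exists Pr. apply HB'. exact H.
    + intros [B [HB [Pr H]]]. apply HS'x in HB as [_ [A [HA [HAB|HAB]]]];
        exists A; split; auto; exists Pr; [left|right]; apply HAB; auto.
  - intros A' HA' c c' Hc. apply in_map_iff in HA' as [Sx [<- HS]].
    assert (HSi : incl Sx Fam) by (intros x Hx; exact (sublists_incl HS Hx)).
    assert (HaT : agree P (setm2 X True c) (setm2 X True c')) by (apply agree_setm2; exact Hc).
    assert (HaF : agree P (setm2 X False c) (setm2 X False c')) by (apply agree_setm2; exact Hc).
    intro U. unfold res. rewrite !(Gc Sx HSi). split.
    + intros [A [HA [Pr [H|H]]]]; exists A; split; auto; exists Pr; [left|right];
        [apply (Hag A (HSi A HA) _ _ HaT)|apply (Hag A (HSi A HA) _ _ HaF)]; exact H.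
    + intros [A [HA [Pr [H|H]]]]; exists A; split; auto; exists Pr; [left|right];
        [apply (Hag A (HSi A HA) _ _ HaT)|apply (Hag A (HSi A HA) _ _ HaF)]; exact H.
Qed.

Fixpoint first x U := match U with [] => 0 | c :: U => if m1 c x then 0 else S (first x U) end.
Fixpoint xsat (U : list letter) (phi : mso L) : Prop :=
  match phi with
  | MLt _ x y => first x U < first y U
  | MEq _ x y => first x U = first y U
  | MIn _ x X => m2 (nth (first x U) U dl) X
  | MAlpha F x => fo_sat M (env (nth (first x U) U dl)) F
  | MNot f => ~ xsat U f
  | MAnd f g => xsat U f /\ xsat U g
  | MEx1 y f => exists p, p < length U /\ xsat (remark y U p 0) f
  | MEx2 X f => exists Pr, xsat (reset X U Pr 0) f
  end.

Lemma agree_m1 P x c c' : In (LM1 x) P -> agree P c c' -> m1 c x = m1 c' x.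
Proof. intros Hi H. specialize (H _ Hi). simpl in H. destruct (m1 c x), (m1 c' x); auto.
  - symmetry; apply H; auto.
  - apply H; auto. Qed.

Ltac atom_tac := split; intros; try exact I; try lia.

Lemma Reg_Lt x y : Reg [LM1 x; LM1 y] (fun U => first x U < first y U).
Proof. apply Reg_atom.
  - intro c. destruct (m1 c x) eqn:E1, (m1 c y) eqn:E2; [right; right | right; left | right; right | left];
      intro U; unfold res; simpl; rewrite ?E1, ?E2; atom_tac.
  - intros c c' Hc U. unfold res; simpl.
    rewrite (agree_m1 x (P := [LM1 x; LM1 y]) (c := c) (c' := c')), (agree_m1 y (P := [LM1 x; LM1 y]) (c := c) (c' := c')); simpl; auto. tauto. Qed.

Lemma Reg_Eq x y : Reg [LM1 x; LM1 y] (fun U => first x U = first y U).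
Proof. apply Reg_atom.
  - intro c. destruct (m1 c x) eqn:E1, (m1 c y) eqn:E2; [right; left | right; right | right; right | left];
      intro U; unfold res; simpl; rewrite ?E1, ?E2; atom_tac.
  - intros c c' Hc U. unfold res; simpl.
    rewrite (agree_m1 x (P := [LM1 x; LM1 y]) (c := c) (c' := c')), (agree_m1 y (P := [LM1 x; LM1 y]) (c := c) (c' := c')); simpl; auto. tauto. Qed.

Lemma Reg_In x X : Reg [LM1 x; LM2 X] (fun U => m2 (nth (first x U) U dl) X).
Proof. apply Reg_atom.
  - intro c. destruct (m1 c x) eqn:E1.
    + destruct (classic (m2 c X)); [right; left|right; right]; intro U; unfold res; simpl; rewrite E1; simpl; tauto.
    + left. intro U; unfold res; simpl; rewrite E1; simpl; tauto.
  - intros c c' Hc U. unfold res; simpl.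
    rewrite (agree_m1 x (c := c) (c' := c') (in_eq _ _) Hc); simpl; auto.
    destruct (m1 c' x); simpl; [|tauto]. apply (Hc (LM2 X)); simpl; auto. Qed.

Lemma Reg_Alpha F x : Reg [LM1 x; LFo F] (fun U => fo_sat M (env (nth (first x U) U dl)) F).
Proof. apply Reg_atom.
  - intro c. destruct (m1 c x) eqn:E1.
    + destruct (classic (fo_sat M (env c) F)); [right; left|right; right]; intro U; unfold res; simpl; rewrite E1; simpl; tauto.
    + left. intro U; unfold res; simpl; rewrite E1; simpl; tauto.
  - intros c c' Hc U. unfold res; simpl.
    rewrite (agree_m1 x (c := c) (c' := c') (in_eq _ _) Hc); simpl; auto.
    destruct (m1 c' x); simpl; [|tauto]. apply (Hc (LFo F)); simpl; auto. Qed.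

Variable n : nat.
Definition lp_ok p := match p with LFo F => fo_formula_n n F | _ => True end.

Lemma xsat_reg phi : mso_alpha_ok n phi -> exists P, (forall p, In p P -> lp_ok p) /\ Reg P (fun U => xsat U phi).
Proof.
  induction phi; simpl; intro Hok.
  - exists [LM1 n0; LM1 n1]. split; [intros p [<-|[<-|[]]]; simpl; auto|apply Reg_Lt].
  - exists [LM1 n0; LM1 n1]. split; [intros p [<-|[<-|[]]]; simpl; auto|apply Reg_Eq].
  - exists [LM1 n0; LM2 n1]. split; [intros p [<-|[<-|[]]]; simpl; auto|apply Reg_In].
  - exists [LM1 n0; LFo f]. split; [intros p [<-|[<-|[]]]; simpl; auto|apply Reg_Alpha].
  - destruct (IHphi Hok) as [P [HP HR]]. exists P; split; auto. apply Reg_not; auto.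
  - destruct Hok as [Hok1 Hok2].
    destruct (IHphi1 Hok1) as [P1 [HP1 HR1]]. destruct (IHphi2 Hok2) as [P2 [HP2 HR2]].
    exists (P1 ++ P2). split; [intros p Hp; apply in_app_or in Hp as [Hp|Hp]; auto|].
    apply Reg_and; auto.
  - destruct (IHphi Hok) as [P [HP HR]]. exists P; split; auto. exact (Reg_ex1 n0 HR).
  - destruct (IHphi Hok) as [P [HP HR]]. exists P; split; auto. exact (Reg_ex2 n0 HR).
Qed.

Lemma first_spec x : forall U k, k < length U ->
  (forall i, i < length U -> m1 (nth i U dl) x = Nat.eqb k i) -> first x U = k.
Proof. induction U as [|c U IH]; simpl; intros k Hk H; [lia|].
  pose proof (H 0 ltac:(lia)) as H0. simpl in H0. rewrite H0. destruct k as [|k]; simpl; auto.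
  f_equal. apply IH; [lia|]. intros i Hi. apply (H (S i)); lia. Qed.

Lemma nth_remark y : forall U p i j, j < length U ->
  nth j (remark y U p i) dl = setm1 y (Nat.eqb (i + j) p) (nth j U dl).
Proof. induction U as [|c U IH]; simpl; intros p i j Hj; [lia|].
  destruct j as [|j]; [rewrite Nat.add_0_r; auto|]. rewrite IH by lia. rewrite Nat.add_succ_r; auto. Qed.
Lemma nth_reset X : forall U Pr i j, j < length U ->
  nth j (reset X U Pr i) dl = setm2 X (Pr (i + j)) (nth j U dl).
Proof. induction U as [|c U IH]; simpl; intros Pr i j Hj; [lia|].
  destruct j as [|j]; [rewrite Nat.add_0_r; auto|]. rewrite IH by lia. rewrite Nat.add_succ_r; auto. Qed.

Lemma corr w phi : forall U e1 e2,
  (forall x, mso_free1 phi x -> e1 x < conv_len w) ->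
  length U = conv_len w ->
  (forall i, i < conv_len w -> env (nth i U dl) = conv_env w i /\
    (forall x, mso_free1 phi x -> m1 (nth i U dl) x = Nat.eqb (e1 x) i) /\
    (forall X, mso_free2 phi X -> (m2 (nth i U dl) X <-> e2 X i))) ->
  (mso_sat M w e1 e2 phi <-> xsat U phi).
Proof.
  induction phi as [x y|x y|x X|F x|f IH|f IHf g IHg|y f IH|X f IH]; intros U e1 e2 Hr Hl Hi; simpl.
  - rewrite (first_spec x U (k := e1 x)), (first_spec y U (k := e1 y)); try tauto;
      try (rewrite Hl; apply Hr; simpl; auto);
      intros i Hi'; apply Hi; simpl; auto; lia.
  - rewrite (first_spec x U (k := e1 x)), (first_spec y U (k := e1 y)); try tauto;
      try (rewrite Hl; apply Hr; simpl; auto);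
      intros i Hi'; apply Hi; simpl; auto; lia.
  - rewrite (first_spec x U (k := e1 x)); [| rewrite Hl; apply Hr; simpl; auto
      | intros i Hi'; apply Hi; simpl; auto; lia].
    symmetry. apply (proj2 (proj2 (Hi _ (Hr x eq_refl)))); simpl; auto.
  - rewrite (first_spec x U (k := e1 x)); [| rewrite Hl; apply Hr; simpl; auto
      | intros i Hi'; apply Hi; simpl; auto; lia].
    rewrite (proj1 (Hi (e1 x) (Hr x eq_refl))). tauto.
  - rewrite (IH U e1 e2); auto; tauto.
  - rewrite (IHf U e1 e2), (IHg U e1 e2); [tauto| | | | | |].
    all: try (intros; apply Hr; simpl; auto; fail); auto.
    all: intros i Hi'; destruct (Hi i Hi') as [H1 [H2 H3]]; repeat split; auto;
      intros; first [apply H2|apply H3]; simpl; auto.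
  - assert (K : forall p, p < conv_len w -> (mso_sat M w (upd e1 y p) e2 f <-> xsat (remark y U p 0) f)).
    { intros p Hp. apply IH.
      + intros x Hx. unfold upd. destruct (Nat.eqb_spec x y); [lia|]. apply Hr; simpl; auto.
      + rewrite length_remark; auto.
      + intros i Hi'. rewrite nth_remark by lia. destruct (Hi i Hi') as [H1 [H2 H3]]. simpl.
        split; [auto|split].
        * intros z Hz; unfold upd; destruct (Nat.eqb_spec z y); [subst; apply Nat.eqb_sym|apply H2; simpl; auto].
        * intros Z HZ; apply H3; exact HZ. }
    rewrite Hl. split; intros [p [Hp H]]; exists p; split; auto; apply (K p Hp); auto.
  - split.
    + intros [Pr [HPr H]]. exists Pr. revert H. apply IH; [auto|rewrite length_reset; auto|].
      intros i Hi'; rewrite nth_reset by lia; destruct (Hi i Hi') as [H1 [H2 H3]];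
        simpl; split; [auto|split]; [intros z Hz; apply H2; exact Hz|].
      intros Z HZ; unfold upd; destruct (Nat.eqb_spec Z X); [tauto|apply H3; simpl; auto].
    + intros [Pr H]. exists (fun p => Pr p /\ p < conv_len w). split; [tauto|].
      revert H. apply IH; [auto|rewrite length_reset; auto|].
      intros i Hi'; rewrite nth_reset by lia; destruct (Hi i Hi') as [H1 [H2 H3]];
        simpl; split; [auto|split]; [intros z Hz; apply H2; exact Hz|].
      intros Z HZ; unfold upd; destruct (Nat.eqb_spec Z X); [tauto|apply H3; simpl; auto].
Qed.

Definition st (k : nat) := {i : nat | i < k}.
Fixpoint enum (k : nat) : list (st k) :=
  match k with
  | 0 => []
  | S k' => exist _ k' (Nat.lt_succ_diag_r k') ::
      map (fun q : st k' => exist (fun i => i < S k') (proj1_sig q) (Nat.lt_lt_succ_r _ _ (proj2_sig q))) (enum k')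
  end.
Lemma enum_complete k : forall q : st k, In q (enum k).
Proof. induction k; intros [i Hi]; [lia|]. simpl.
  destruct (Nat.eq_dec i k) as [->|Hne].
  - left. f_equal. apply proof_irrelevance.
  - right. assert (Hi' : i < k) by lia.
    apply in_map_iff. exists (exist _ i Hi'). split; [f_equal; apply proof_irrelevance|apply IHk]. Qed.

Definition base a := mkL a (fun _ => false) (fun _ => False).
Definition bdec (Q : Prop) : bool := if excluded_middle_informative Q then true else false.
Definition vec (P : list lp) c := map (fun p => bdec (peval p c)) P.
Definition tr (p : lp) : fo L := match p with LFo F => F | _ => FNot (FEq L 0 0) end.
Fixpoint chi (P : list lp) (v : list bool) : fo L :=
  match P, v with
  | p :: P', b :: v' => FAnd (if b then tr p else FNot (tr p)) (chi P' v')
  | _, _ => FEq L 0 0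
  end.
Fixpoint allvecs (m : nat) : list (list bool) :=
  match m with 0 => [[]] | S m => map (cons true) (allvecs m) ++ map (cons false) (allvecs m) end.
Lemma allvecs_in v : In v (allvecs (length v)).
Proof. induction v as [|b v IH]; simpl; auto. apply in_or_app. destruct b; [left|right]; apply in_map; auto. Qed.
Lemma allvecs_len m : forall v, In v (allvecs m) -> length v = m.
Proof. induction m; simpl; intros v H. - destruct H as [<-|[]]; auto.
  - apply in_app_or in H as [H|H]; apply in_map_iff in H as [v' [<- H]]; simpl; f_equal; auto. Qed.

Lemma bdec_true Q : bdec Q = true <-> Q.
Proof. unfold bdec; destruct (excluded_middle_informative Q); split; intros; auto; discriminate. Qed.
Lemma bdec_false Q : bdec Q = false <-> ~ Q.
Proof. unfold bdec; destruct (excluded_middle_informative Q); split; intros; auto; try discriminate; tauto. Qed.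

Lemma tr_sat a p : fo_sat M a (tr p) <-> peval p (base a).
Proof. destruct p; simpl; [tauto| |]; split; intros H; try discriminate; try contradiction; exfalso; apply H; reflexivity. Qed.

Lemma chi_sat a : forall P v, length v = length P -> (fo_sat M a (chi P v) <-> vec P (base a) = v).
Proof. induction P as [|p P IH]; intros [|b v] Hl; simpl in *; try discriminate.
  - split; auto.
  - rewrite IH by lia. destruct b.
    + rewrite tr_sat. split; [intros [H1 H2]; rewrite H2; f_equal; apply bdec_true; auto|].
      intro H; injection H as H1 H2; split; auto; apply bdec_true; auto.
    + change (fo_sat M a (FNot (tr p))) with (~ fo_sat M a (tr p)). rewrite tr_sat.
      split; [intros [H1 H2]; rewrite H2; f_equal; apply bdec_false; auto|].
      intro H; injection H as H1 H2; split; auto; apply bdec_false; auto. Qed.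

Lemma vec_agree P c c' : vec P c = vec P c' -> agree P c c'.
Proof. induction P as [|p P IH]; simpl; intros H q Hq; [destruct Hq|].
  injection H as H1 H2. destruct Hq as [<-|Hq]; [|apply IH; auto].
  unfold bdec in H1. destruct (excluded_middle_informative (peval p c)), (excluded_middle_informative (peval p c'));
    try discriminate; tauto. Qed.

Hypothesis Hn : 1 <= n.
Lemma chi_ok P v : (forall p, In p P -> lp_ok p) -> fo_formula_n n (chi P v).
Proof. revert v; induction P as [|p P IH]; intros [|b v] HP x Hx; simpl in Hx; try lia.
  destruct Hx as [Hx|Hx]; [|apply (IH v); auto; intros; apply HP; simpl; auto].
  assert (Htr : fo_free (tr p) x -> x < n).
  { destruct p; simpl; intro H; [apply (HP (LFo F)); simpl; auto|lia|lia]. }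
  destruct b; simpl in Hx; auto. Qed.

Definition U0 (w : list (list (dom M))) := map (fun i => base (conv_env w i)) (seq 0 (conv_len w)).
Lemma U0_len w : length (U0 w) = conv_len w.
Proof. unfold U0. rewrite length_map, length_seq; auto. Qed.
Lemma U0_nth w i : i < conv_len w -> nth i (U0 w) dl = base (conv_env w i).
Proof. intro H. unfold U0. assert (G : forall m s0 i, i < m ->
    nth i (map (fun i => base (conv_env w i)) (seq s0 m)) dl = base (conv_env w (s0 + i))).
  { induction m; intros s0 j Hj; [lia|]. simpl. destruct j as [|j].
    - rewrite Nat.add_0_r; auto.
    - rewrite IHm by lia. rewrite Nat.add_succ_r; auto. }
  apply G; auto. Qed.

Lemma skipn_cons_nth {T} (U : list T) d : forall i, i < length U -> skipn i U = nth i U d :: skipn (S i) U.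
Proof. induction U; simpl; intros i Hi; [lia|]. destruct i; auto. simpl. apply IHU; lia. Qed.

Lemma reg_aut P (HP : forall p, In p P -> lp_ok p) (Fam : list (list letter -> Prop)) A0
  (HA0 : In A0 Fam)
  (Hcl : forall A, In A Fam -> forall c, exists B, In B Fam /\ equivL (res c A) B)
  (Hag : forall A, In A Fam -> forall c c', agree P c c' -> equivL (res c A) (res c' A)) :
  exists Au : automaton L n, forall w, accepts M Au w <-> A0 (U0 w).
Proof.
  set (k := length Fam).
  set (FamS := fun q : st k => nth (proj1_sig q) Fam (fun _ => False)).
  assert (HFin : forall q, In (FamS q) Fam) by (intros [i Hi]; apply nth_In; auto).
  assert (Dex : forall (q : st k) (v : list bool), exists j : st k,
             forall a, vec P (base a) = v -> equivL (res (base a) (FamS q)) (FamS j)).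
  { intros q v. destruct (classic (exists a, vec P (base a) = v)) as [[a0 Ha0]|Hno].
    - destruct (Hcl _ (HFin q) (base a0)) as [B [HB HB']].
      apply In_nth with (d := fun _ => False) in HB as [j [Hj HjB]].
      exists (exist _ j Hj). intros a Ha U. unfold FamS; simpl. rewrite HjB.
      rewrite <- (HB' U). apply Hag; [apply HFin|]. apply vec_agree. congruence.
    - exists q. intros a Ha. exfalso; eauto. }
  set (delta := fun q v => proj1_sig (constructive_indefinite_description _ (Dex q v))).
  assert (Hdelta : forall q a, equivL (res (base a) (FamS q)) (FamS (delta q (vec P (base a))))).
  { intros q a. exact (proj2_sig (constructive_indefinite_description _ (Dex q (vec P (base a)))) a eq_refl). }
  set (trs := flat_map (fun q => map (fun v => (q, chi P v, delta q v)) (allvecs (length P))) (enum k)).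
  assert (Htrs : forall q F q', In (q, F, q') trs -> fo_formula_n n F).
  { intros q F q' H. apply in_flat_map in H as [q0 [_ H]]. apply in_map_iff in H as [v [Hv _]].
    injection Hv as _ <- _. apply chi_ok; auto. }
  apply In_nth with (d := fun _ => False) in HA0 as [i0 [Hi0 Hi0A]].
  set (q0 := exist (fun i => i < k) i0 Hi0 : st k).
  exists {| state := st k; state_finite := ex_intro _ (enum k) (@enum_complete k);
            initial := fun q => equivL (FamS q) A0; final := fun q => FamS q [];
            trans := trs; trans_ok := Htrs |}.
  intro w. unfold accepts; simpl.
  set (U := U0 w).
  assert (Inv : forall run : nat -> st k, equivL (FamS (run 0)) A0 ->
     (forall i, i < conv_len w -> equivL (res (nth i U dl) (FamS (run i))) (FamS (run (S i)))) ->
     forall i, i <= conv_len w -> (FamS (run i) (skipn i U) <-> A0 U)).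
  { intros run H0 Hs i. induction i as [|i IH]; intro Hi.
    - simpl. apply H0.
    - rewrite <- IH by lia. rewrite (@skipn_cons_nth _ U dl i) by (unfold U; rewrite U0_len; lia).
      symmetry; apply Hs; lia. }
  assert (Hsk : skipn (conv_len w) U = []).
  { apply skipn_all2. unfold U; rewrite U0_len; auto. }
  split.
  - intros [run [Hi [Hf Ht]]].
    assert (Hst : forall i, i < conv_len w -> equivL (res (nth i U dl) (FamS (run i))) (FamS (run (S i)))).
    { intros i Hi'. destruct (Ht i Hi') as [F [HF HF']].
      apply in_flat_map in HF as [q [_ HF]]. apply in_map_iff in HF as [v [Hv Hvin]].
      injection Hv as E1 E2 E3. subst q. rewrite <- E2 in HF'. rewrite <- E3.
      apply allvecs_len in Hvin.
      apply (chi_sat (conv_env w i) P v Hvin) in HF'. rewrite <- HF'.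
      unfold U; rewrite U0_nth by auto; apply Hdelta. }
    rewrite <- (Inv run Hi Hst (conv_len w) (le_n _)).
    rewrite Hsk. exact Hf.
  - intro HA.
    set (run := fix r (i : nat) : st k := match i with 0 => q0 | S i => delta (r i) (vec P (base (conv_env w i))) end).
    assert (Hr0 : equivL (FamS (run 0)) A0) by (intro V; simpl; unfold FamS; simpl; rewrite Hi0A; tauto).
    assert (Hst : forall i, i < conv_len w -> equivL (res (nth i U dl) (FamS (run i))) (FamS (run (S i)))).
    { intros i Hi. unfold U; rewrite U0_nth by auto. apply Hdelta. }
    exists run. split; [exact Hr0|]. split.
    + pose proof (Inv run Hr0 Hst (conv_len w) (le_n _)) as H. rewrite Hsk in H. apply H; exact HA.
    + intros i Hi. exists (chi P (vec P (base (conv_env w i)))). split.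
      * apply in_flat_map. exists (run i). split; [apply enum_complete|].
        apply in_map_iff. exists (vec P (base (conv_env w i))). split; auto.
        unfold vec. rewrite <- (length_map (fun p => bdec (peval p (base (conv_env w i)))) P).
        apply allvecs_in.
      * apply chi_sat; auto. unfold vec; rewrite length_map; auto.
Qed.
End PartB.


Theorem proposition3p4 (L : rel_lang) (M : structure L) (n : nat)
    (R : list (list (dom M)) -> Prop) :
  1 <= n -> (mso_definable M n R <-> recognizable M n R).
Proof.
  intros Hn. split.
  - intros [psi [[Hs1 Hs2] [Hok Hsem]]].
    destruct (xsat_reg M n psi Hok) as [P [HP [Fam [[A0 [HA0 HA0']] [Hcl Hag]]]]].
    destruct (@reg_aut L M n Hn P HP Fam A0 HA0 Hcl Hag) as [Au HAu].
    exists Au. intros w Hw. rewrite (Hsem w Hw), HAu, <- (HA0' (U0 M w)).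
    apply corr.
    + intros x Hx; exfalso; apply (Hs1 x Hx).
    + apply U0_len.
    + intros i Hi. rewrite (U0_nth M Hn w) by auto. simpl. split; [auto|split].
      * intros x Hx; exfalso; apply (Hs1 x Hx).
      * intros X HX; exfalso; apply (Hs2 X HX).
  - apply rec_def.
Qed.
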